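(* Let $\phi$ be a real function on finite strings over $\{1,\dots,k_0\}$ that is increasing, i.e. $\phi(u)\le\phi(w)$ whenever $u$ is a contiguous substring of $w$. For the stationary mean $\mu$ of the RHA process and all $n\ge1$, $j\ge1$, $$\mathbb E_P\,\phi(X^{n-1}_j)\le\mathbb E_\mu\,\phi(\xi_{1:2^n})\le\mathbb E_P\,\phi(X^{n+1}_j).$$
   Context: Random hierarchical association (RHA) process. Fix positive integers $(k_n)_{n\ge0}$ (perplexities) with $k_{n-1}\le k_n\le k_{n-1}^2$ for all $n\ge1$. On a probability space $(\Omega,\mathcal J,P)$ let, for each $n\ge1$, $(L_{nj},R_{nj})_{j=1}^{k_n}$ be the lexicographically sorted enumeration of a uniformly random $k_n$-element subset of $\{1,\dots,k_{n-1}\}^2$ (each of the $\binom{k_{n-1}^2}{k_n}$ subsets equally likely), independently over $n$. Let $(C_n)_{n\ge0}$ be independent, independent of all $(L_{nj},R_{nj})$, with $C_n$ uniform on $\{1,\dots,k_n\}$. Define strings $Y^0_j=j$ (length 1) for $1\le j\le k_0$ and $Y^n_j=Y^{n-1}_{L_{nj}}Y^{n-1}_{R_{nj}}$ (concatenation). The RHA process is $\mathcal X=Y^0_{C_0}Y^1_{C_1}Y^2_{C_2}\cdots=X_1X_2X_3\cdots$, $X_{k:l}=X_k\cdots X_l$; for $n\ge0$, $j\ge1$, $X^n_j=X_{j2^n:(j+1)2^n-1}$. The limits $\mu(x_{1:m})=\lim_{N\to\infty}\frac1N\sum_{i=1}^NP(X_{i:i+m-1}=x_{1:m})$ exist and define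 a stationary probability measure $\mu$ on $\{1,\dots,k_0\}^{\mathbb N}$ (the stationary mean), with coordinate maps $\xi_i$. *)

(* Defs.v *)
(* Reals + lists.  All probabilities are finite uniform averages. *)
From Stdlib Require Import Reals List Arith.
Import ListNotations.
Open Scope R_scope.

Fixpoint choose {A : Type} (r : nat) (l : list A) : list (list A) :=
  match l with
  | [] => match r with O => [[]] | S _ => [] end
  | x :: l' => match r with
               | O => [[]]
               | S r' => map (cons x) (choose r' l') ++ choose r l'
               end
  end.

Definition pairs (m : nat) : list (nat * nat) :=
  flat_map (fun a => map (fun b => (a, b)) (seq 1 m)) (seq 1 m).

(* all possible values of [S_1; ...; S_N], S_n = the sorted enumeration
   (L_{nj},R_{nj})_{j=1}^{k_n} of a k_n-subset of {1..k_{n-1}}^2 *)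
Fixpoint levels (k : nat -> nat) (N : nat) : list (list (list (nat * nat))) :=
  match N with
  | O => [[]]
  | S N' => flat_map (fun ss => map (fun s => ss ++ [s]) (choose (k N) (pairs (k N'))))
                     (levels k N')
  end.

(* all possible values of [C_0; ...; C_N], C_n in {1..k_n} *)
Fixpoint cvals (k : nat -> nat) (N : nat) : list (list nat) :=
  match N with
  | O => map (fun c => [c]) (seq 1 (k O))
  | S N' => flat_map (fun cs => map (fun c => cs ++ [c]) (seq 1 (k N))) (cvals k N')
  end.

(* sample space of all random choices up to level N (uniform, independent) *)
Definition Omega (k : nat -> nat) (N : nat) :=
  list_prod (levels k N) (cvals k N).

(* Y^n_j built from the level choices Ss = [S_1; ...] *)
Fixpoint Ystr (Ss : list (list (nat * nat))) (n j : nat) : list nat :=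
  match n with
  | O => [j]
  | S n' => let '(l, r) := nth (j - 1) (nth n' Ss []) (0%nat, 0%nat) in
            Ystr Ss n' l ++ Ystr Ss n' r
  end.

(* X_1 ... X_{2^{N+1}-1} = Y^0_{C_0} Y^1_{C_1} ... Y^N_{C_N} *)
Definition prefix (N : nat) (w : list (list (nat * nat)) * list nat) : list nat :=
  flat_map (fun n => Ystr (fst w) n (nth n (snd w) 0%nat)) (seq 0 (S N)).

(* X_{a:a+len-1} (1-indexed) *)
Definition window (N : nat) (w : list (list (nat * nat)) * list nat) (a len : nat)
  : list nat := firstn len (skipn (a - 1) (prefix N w)).

Definition sumR (l : list R) : R := fold_right Rplus 0 l.

Definition EP (k : nat -> nat) (N : nat)
  (f : list (list (nat * nat)) * list nat -> R) : R :=
  sumR (map f (Omega k N)) / INR (length (Omega k N)).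

(* E_P g(X_{a:a+len-1}); levels up to a+len suffice since 2^{N+1}-1 >= N *)
Definition EX (k : nat -> nat) (a len : nat) (g : list nat -> R) : R :=
  EP k (a + len) (fun w => g (window (a + len) w a len)).

Definition Pwin (k : nat -> nat) (i : nat) (x : list nat) : R :=
  EX k i (length x) (fun w => if list_eq_dec Nat.eq_dec w x then 1 else 0).

(* Cesaro average (1/N) sum_{i=1}^N P(X_{i:i+m-1} = x), indexed by N-1 *)
Definition cesaro (k : nat -> nat) (x : list nat) (N : nat) : R :=
  sumR (map (fun i => Pwin k i x) (seq 1 (S N))) / INR (S N).

Fixpoint words (k0 m : nat) : list (list nat) :=
  match m with
  | O => [[]]
  | S m' => flat_map (fun w => map (fun c => w ++ [c]) (seq 1 k0)) (words k0 m')
  end.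

Definition over_alphabet (k0 : nat) (w : list nat) : Prop :=
  Forall (fun c => (1 <= c <= k0)%nat) w.

Definition substring (u w : list nat) : Prop :=
  exists p s, w = p ++ u ++ s.

Definition str_increasing (k0 : nat) (phi : list nat -> R) : Prop :=
  forall u w, over_alphabet k0 w -> substring u w -> phi u <= phi w.

(* Main.v *)
Require Import Defs.
From Stdlib Require Import Reals List Arith Lia Lra.
Import ListNotations.
Open Scope R_scope.

Definition sm {A} (l : list A) (f : A -> R) : R := sumR (map f l).
Definition avg {A} (l : list A) (f : A -> R) : R := sm l f / INR (length l).

Lemma sm_nil {A} (f : A -> R) : sm [] f = 0.
Proof. reflexivity. Qed.
Lemma sm_cons {A} (x : A) l f : sm (x :: l) f = f x + sm l f.
Proof. reflexivity. Qed.
Lemma sm_app {A} (l1 l2 : list A) f : sm (l1 ++ l2) f = sm l1 f + sm l2 f.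
Proof. induction l1; simpl; unfold sm in *; simpl; [lra|]. rewrite IHl1; lra. Qed.
Lemma sm_ext_in {A} (l : list A) f g : (forall x, In x l -> f x = g x) -> sm l f = sm l g.
Proof. induction l; intros H; [reflexivity|]. rewrite !sm_cons, H, IHl; simpl; auto. intros; apply H; simpl; auto. Qed.
Lemma sm_ext {A} (l : list A) f g : (forall x, f x = g x) -> sm l f = sm l g.
Proof. intros; apply sm_ext_in; auto. Qed.
Lemma sm_plus {A} (l : list A) f g : sm l (fun x => f x + g x) = sm l f + sm l g.
Proof. induction l; [unfold sm; simpl; lra|]. rewrite !sm_cons, IHl; lra. Qed.
Lemma sm_scal {A} (l : list A) c f : sm l (fun x => c * f x) = c * sm l f.
Proof. induction l; [unfold sm; simpl; lra|]. rewrite !sm_cons, IHl; lra. Qed.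
Lemma sm_const {A} (l : list A) c : sm l (fun _ => c) = INR (length l) * c.
Proof. induction l; [unfold sm; simpl; lra|]. rewrite sm_cons, IHl, length_cons, S_INR; lra. Qed.
Lemma sm_map {A B} (l : list A) (h : A -> B) f : sm (map h l) f = sm l (fun x => f (h x)).
Proof. unfold sm; rewrite map_map; reflexivity. Qed.
Lemma sm_flat {A B} (l : list A) (g : A -> list B) f :
  sm (flat_map g l) f = sm l (fun a => sm (g a) f).
Proof. induction l; [reflexivity|]. simpl. rewrite sm_app, sm_cons, IHl; reflexivity. Qed.
Lemma sm_le {A} (l : list A) f g : (forall x, In x l -> f x <= g x) -> sm l f <= sm l g.
Proof. induction l; intros H; [unfold sm; simpl; lra|]. rewrite !sm_cons.
  assert (f a <= g a) by (apply H; simpl; auto).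
  assert (sm l f <= sm l g) by (apply IHl; intros; apply H; simpl; auto). lra. Qed.
Lemma sm_swap {A B} (l : list A) (m : list B) f :
  sm l (fun x => sm m (fun y => f x y)) = sm m (fun y => sm l (fun x => f x y)).
Proof. induction l; simpl.
  - rewrite sm_nil. symmetry. rewrite (sm_ext m _ (fun _ => 0)); [|intros; reflexivity].
    rewrite sm_const; lra.
  - rewrite sm_cons, IHl, <- sm_plus. apply sm_ext; intros; rewrite sm_cons; reflexivity. Qed.
Lemma length_flat_const {A B} (l : list A) (g : A -> list B) K :
  (forall a, length (g a) = K) -> length (flat_map g l) = (length l * K)%nat.
Proof. intros H; induction l; simpl; auto. rewrite length_app, H, IHl; lia. Qed.

Lemma avg_ext_in {A} (l : list A) f g : (forall x, In x l -> f x = g x) -> avg l f = avg l g.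
Proof. intros; unfold avg; rewrite (sm_ext_in l f g); auto. Qed.
Lemma avg_ext {A} (l : list A) f g : (forall x, f x = g x) -> avg l f = avg l g.
Proof. intros; apply avg_ext_in; auto. Qed.
Lemma avg_le {A} (l : list A) f g : (forall x, In x l -> f x <= g x) -> avg l f <= avg l g.
Proof. intros H; unfold avg, Rdiv. apply Rmult_le_compat_r.
  - destruct (length l) eqn:E. simpl; rewrite Rinv_0; lra.
    left; apply Rinv_0_lt_compat; apply lt_0_INR; lia.
  - apply sm_le; auto. Qed.
Lemma avg_const {A} (l : list A) c : l <> [] -> avg l (fun _ => c) = c.
Proof. intros H; unfold avg; rewrite sm_const. destruct l; [congruence|].
  simpl length. field. apply not_0_INR; lia. Qed.
Lemma avg_plus {A} (l : list A) f g : avg l (fun x => f x + g x) = avg l f + avg l g.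
Proof. unfold avg; rewrite sm_plus; unfold Rdiv; lra. Qed.
Lemma avg_scal {A} (l : list A) c f : avg l (fun x => c * f x) = c * avg l f.
Proof. unfold avg; rewrite sm_scal; unfold Rdiv; lra. Qed.
Lemma avg_sm {A B} (l : list A) (m : list B) f :
  avg l (fun x => sm m (fun y => f x y)) = sm m (fun y => avg l (fun x => f x y)).
Proof. unfold avg. rewrite sm_swap. unfold Rdiv. rewrite Rmult_comm, <- sm_scal.
  apply sm_ext; intros; lra. Qed.
Lemma avg_flat {A B C} (l : list A) (m : list B) (h : A -> B -> C) f :
  m <> [] -> avg (flat_map (fun a => map (h a) m) l) f = avg l (fun a => avg m (fun b => f (h a b))).
Proof. intros Hm. unfold avg. rewrite sm_flat.
  rewrite (length_flat_const _ _ (length m)) by (intros; apply length_map).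
  rewrite mult_INR. unfold Rdiv.
  assert (INR (length m) <> 0) by (destruct m; [congruence|]; simpl length; apply not_0_INR; lia).
  rewrite (sm_ext l (fun a => sm (map (h a) m) f) (fun a => sm m (fun b => f (h a b))))
    by (intros; apply sm_map).
  rewrite (sm_ext l (fun a => sm m (fun b => f (h a b)) * / INR (length m))
     (fun a => / INR (length m) * sm m (fun b => f (h a b)))) by (intros; lra).
  rewrite sm_scal.
  destruct (length l) eqn:El.
  - destruct l; [|simpl in El; lia]. rewrite !sm_nil. lra.
  - rewrite Rinv_mult. field. split; auto. apply not_0_INR; lia. Qed.
Lemma avg_eq_scal {A} (l : list A) f : avg l f = / INR (length l) * sm l f.
Proof. unfold avg, Rdiv; lra. Qed.
Lemma avg_swap {A B} (l : list A) (m : list B) f :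
  avg l (fun x => avg m (fun y => f x y)) = avg m (fun y => avg l (fun x => f x y)).
Proof. rewrite (avg_ext l _ (fun x => / INR (length m) * sm m (fun y => f x y)))
    by (intros; apply avg_eq_scal).
  rewrite (avg_ext m _ (fun y => / INR (length l) * sm l (fun x => f x y)))
    by (intros; apply avg_eq_scal).
  rewrite !avg_scal, !avg_eq_scal, sm_swap. lra. Qed.

Fixpoint bin (n r : nat) : nat :=
  match n, r with
  | _, O => 1%nat
  | O, S _ => 0%nat
  | S n', S r' => (bin n' r' + bin n' (S r'))%nat
  end.

Lemma choose_0 {A} (l : list A) : choose 0 l = [[]].
Proof. destruct l; reflexivity. Qed.

Lemma choose_len {A} r (l : list A) : length (choose r l) = bin (length l) r.
Proof. revert r; induction l; intros r; destruct r; simpl; auto.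
  rewrite length_app, length_map, IHl, IHl. reflexivity. Qed.

Lemma choose_elem_len {A} r (l : list A) s : In s (choose r l) -> length s = r.
Proof. revert r s; induction l; intros r s H; destruct r; simpl in H.
  - destruct H as [<-|[]]; reflexivity.
  - destruct H.
  - destruct H as [<-|[]]; reflexivity.
  - apply in_app_or in H; destruct H as [H|H].
    + apply in_map_iff in H; destruct H as [s' [<- H]]. simpl; f_equal; eauto.
    + eauto. Qed.

Lemma choose_elem_incl {A} r (l : list A) s x : In s (choose r l) -> In x s -> In x l.
Proof. revert r s; induction l; intros r s H Hx; destruct r; simpl in H.
  - destruct H as [<-|[]]; destruct Hx.
  - destruct H.
  - destruct H as [<-|[]]; destruct Hx.
  - apply in_app_or in H; destruct H as [H|H].
    + apply in_map_iff in H; destruct H as [s' [<- H]]. destruct Hx as [<-|Hx]; [left; auto|].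
      right; eauto.
    + right; eauto. Qed.

Lemma bin_pos n r : (r <= n)%nat -> (0 < bin n r)%nat.
Proof. revert r; induction n; intros r H; destruct r; simpl; try lia.
  specialize (IHn r ltac:(lia)); lia. Qed.

Lemma choose_nonempty {A} r (l : list A) : (r <= length l)%nat -> choose r l <> [].
Proof. intros H E. pose proof (choose_len r l) as L. rewrite E in L. simpl in L.
  pose proof (bin_pos _ _ H). lia. Qed.

Lemma bin_0 n : bin n 0 = 1%nat. Proof. destruct n; reflexivity. Qed.
Lemma bin_SS n r : bin (S n) (S r) = (bin n r + bin n (S r))%nat. Proof. reflexivity. Qed.
Lemma bin_absorb n r : (S r * bin (S n) (S r) = S n * bin n r)%nat.
Proof. revert r; induction n; intros r.
  - destruct r; simpl; lia.
  - destruct r.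
    + pose proof (IHn 0%nat) as H. rewrite bin_0 in *. rewrite bin_SS, bin_0. lia.
    + rewrite (bin_SS (S n) (S r)).
      pose proof (IHn r) as H1. pose proof (IHn (S r)) as H2.
      rewrite !bin_SS in *.
      remember (bin n (S (S r))) as c.
      remember (bin n r) as x. remember (bin n (S r)) as y. nia.
Qed.

Lemma choose_single {A} (h : A -> R) : forall l' x r,
  sm (choose (S r) (x :: l')) (fun s => sm s h) = INR (bin (length l') r) * sm (x :: l') h.
Proof. induction l' as [|y l'' IH]; intros x r.
  - simpl. destruct r; simpl; unfold sm; simpl; lra.
  - change (choose (S r) (x :: y :: l'')) with
      (map (cons x) (choose r (y :: l'')) ++ choose (S r) (y :: l'')).
    rewrite sm_app, sm_map, IH.
    rewrite (sm_ext _ (fun s => sm (x :: s) h) (fun s => h x + sm s h)) by (intros; apply sm_cons).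
    rewrite sm_plus, sm_const, choose_len. destruct r.
    + rewrite choose_0, !bin_0. unfold sm; simpl. lra.
    + rewrite IH. simpl length. change (bin (S (length l'')) (S r)) with
        (bin (length l'') r + bin (length l'') (S r))%nat.
      rewrite !sm_cons, plus_INR. lra. Qed.

Lemma map_nth_seq1 {A} (s : list A) d :
  map (fun c => nth (c - 1) s d) (seq 1 (length s)) = s.
Proof.
  apply nth_ext with (d := d) (d' := d); rewrite ?length_map, ?length_seq; auto.
  intros i Hi. rewrite (nth_indep _ d ((fun c => nth (c - 1) s d) 0%nat)) by (rewrite length_map, length_seq; auto).
  rewrite (map_nth (fun c => nth (c - 1) s d)).
  rewrite seq_nth by auto. f_equal; lia. Qed.

Lemma avg_seq_nth {A} (s : list A) d h :
  avg (seq 1 (length s)) (fun c => h (nth (c - 1) s d)) = avg s h.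
Proof. unfold avg. rewrite length_seq. f_equal.
  rewrite <- (sm_map (seq 1 (length s)) (fun c => nth (c - 1) s d) h).
  rewrite map_nth_seq1. reflexivity. Qed.

Lemma single_avg {A} (l : list A) r d (h : A -> R) :
  (1 <= r <= length l)%nat ->
  avg (choose r l) (fun s => avg (seq 1 r) (fun c => h (nth (c - 1) s d))) = avg l h.
Proof. intros Hr. destruct l as [|x l']; [simpl in Hr; lia|]. destruct r as [|r']; [lia|].
  rewrite (avg_ext_in _ _ (fun s => avg s h)).
  2:{ intros s Hs. rewrite <- (choose_elem_len _ _ _ Hs). apply avg_seq_nth. }
  rewrite (avg_ext_in _ _ (fun s => / INR (S r') * sm s h)).
  2:{ intros s Hs. unfold avg. rewrite (choose_elem_len _ _ _ Hs). unfold Rdiv; lra. }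
  rewrite avg_scal. unfold avg. rewrite choose_single, choose_len.
  pose proof (bin_absorb (length l') r') as Hab.
  assert (0 < bin (length l') r')%nat by (apply bin_pos; simpl in Hr; lia).
  apply (f_equal INR) in Hab. rewrite !mult_INR in Hab.
  simpl length. 
  assert (INR (bin (S (length l')) (S r')) = INR (S (length l')) * INR (bin (length l') r') / INR (S r')).
  { rewrite <- Hab. field. apply not_0_INR; lia. }
  rewrite H0. field. split; [apply not_0_INR; lia|]. split; apply not_0_INR; lia. Qed.

Definition Full {A} (H : A -> A -> R) (l : list A) := sm l (fun a => sm l (fun b => H a b)).
Definition Dg {A} (H : A -> A -> R) (l : list A) := sm l (fun a => H a a).
Fixpoint off {A} (H : A -> A -> R) (l : list A) : R :=
  match l with [] => 0 | x :: l' => sm l' (fun b => H x b + H b x) + off H l' end.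
Definition cc1 {A} (r : nat) (l : list A) : nat :=
  match r, l with S r', _ :: l' => bin (length l') r' | _, _ => 0%nat end.
Definition cc2 {A} (r : nat) (l : list A) : nat :=
  match r, l with S (S r'), _ :: _ :: l'' => bin (length l'') r' | _, _ => 0%nat end.

Lemma full_cons {A} (H : A -> A -> R) x l : Full H (x :: l) = H x x + sm l (fun b => H x b + H b x) + Full H l.
Proof. unfold Full. rewrite sm_cons, sm_cons.
  rewrite (sm_ext l (fun a => sm (x :: l) (fun b => H a b)) (fun a => H a x + sm l (fun b => H a b)))
    by (intros; apply sm_cons).
  rewrite !sm_plus. change (sm l (H x)) with (sm l (fun b => H x b)). lra. Qed.

Lemma full_eq {A} (H : A -> A -> R) l : Full H l = Dg H l + off H l.
Proof. induction l; [unfold Full, Dg; simpl; unfold sm; simpl; lra|].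
  rewrite full_cons, IHl. unfold Dg. rewrite sm_cons. cbn [off]. ring. Qed.

Ltac crush := unfold cc1, cc2, Dg, Full in *; simpl; unfold sm; simpl; rewrite ?bin_0; simpl; lra.

Definition U {A} (H : A -> A -> R) (r : nat) (l : list A) := sm (choose r l) (Full H).

Lemma choose_pair {A} (H : A -> A -> R) : forall l r, U H r l = INR (cc1 r l) * Dg H l + INR (cc2 r l) * off H l.
Proof. induction l as [|x l' IH]; intros r.
  - destruct r; unfold U, cc1, cc2, Full, Dg, sm; simpl; lra.
  - destruct r as [|r'].
    + unfold U; rewrite choose_0. unfold cc1, cc2, Full, Dg, sm; simpl; lra.
    + unfold U. change (choose (S r') (x :: l')) with
        (map (cons x) (choose r' l') ++ choose (S r') l').
      rewrite sm_app, sm_map.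
      rewrite (sm_ext _ (fun s => Full H (x :: s))
        (fun s => H x x + sm s (fun b => H x b + H b x) + Full H s)) by (intros; apply full_cons).
      rewrite !sm_plus, sm_const, choose_len. fold (U H r' l'). fold (U H (S r') l').
      rewrite !IH. destruct r' as [|r''].
      * rewrite choose_0, bin_0. destruct l' as [|y l''].
        -- crush.
        -- unfold cc1, cc2, Dg. simpl length. rewrite !bin_0. unfold sm; simpl. lra.
      * destruct l' as [|y l''].
        -- crush.
        -- rewrite choose_single. unfold cc1, cc2. simpl length.
           rewrite bin_SS. unfold Dg. rewrite !sm_cons. simpl off.
           destruct l'' as [|z l3].
           ++ destruct r''; crush.
           ++ destruct r'' as [|q].
              ** simpl length. rewrite !bin_0. rewrite !plus_INR. simpl. rewrite !sm_cons. lra.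
              ** simpl length. rewrite (bin_SS (length l3) q). rewrite !plus_INR. rewrite !sm_cons. lra.
Qed.

Lemma pairs_len m : length (pairs m) = (m * m)%nat.
Proof. unfold pairs. rewrite (length_flat_const _ _ m).
  - rewrite length_seq; auto.
  - intros; rewrite length_map, length_seq; auto. Qed.

Lemma sm_pairs m f : sm (pairs m) f = sm (seq 1 m) (fun a => sm (seq 1 m) (fun b => f (a, b))).
Proof. unfold pairs. rewrite sm_flat. apply sm_ext; intros; apply sm_map. Qed.

Lemma seq_ne m : (1 <= m)%nat -> seq 1 m <> [].
Proof. destruct m; [lia|]. simpl; congruence. Qed.

Lemma avg_pairs m f : (1 <= m)%nat ->
  avg (pairs m) f = avg (seq 1 m) (fun a => avg (seq 1 m) (fun b => f (a, b))).
Proof. intros Hm. unfold pairs. rewrite avg_flat by (apply seq_ne; auto). reflexivity. Qed.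

Lemma pair_count (x : nat * nat) P' r' :
  (S (length P') * (cc1 (S r') (x :: P') + cc2 (S r') (x :: P') * length P')
   = bin (S (length P')) (S r') * S r' * S r')%nat.
Proof. destruct r' as [|r''].
  - unfold cc1, cc2. rewrite bin_0. pose proof (bin_absorb (length P') 0) as Hb. rewrite bin_0 in Hb. lia.
  - destruct P' as [|y P''].
    + unfold cc1, cc2. simpl. lia.
    + unfold cc1, cc2. simpl length.
      pose proof (bin_absorb (length P'') r'') as H1.
      pose proof (bin_absorb (S (length P'')) (S r'')) as H2.
      remember (bin (S (length P'')) (S r'')) as a.
      remember (bin (S (S (length P''))) (S (S r''))) as b.
      remember (bin (length P'') r'') as c. nia. Qed.

Lemma pair_avg m r (d : nat * nat) (g : nat -> nat -> R) :
  (1 <= r <= m * m)%nat ->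
  avg (choose r (pairs m)) (fun s => avg (seq 1 r) (fun a => avg (seq 1 r)
      (fun b => g (snd (nth (a - 1) s d)) (fst (nth (b - 1) s d)))))
  = avg (seq 1 m) (fun x => avg (seq 1 m) (fun y => g x y)).
Proof. intros Hr. set (H := fun a b : nat * nat => g (snd a) (fst b)).
  assert (Hm : (1 <= m)%nat) by nia.
  rewrite (avg_ext_in _ _ (fun s => / INR (r * r) * Full H s)).
  2:{ intros s Hs. pose proof (choose_elem_len _ _ _ Hs) as Hl. rewrite <- Hl.
      rewrite (avg_ext _ _ (fun a => avg s (fun b' => H (nth (a - 1) s d) b')))
        by (intros a; apply (avg_seq_nth s d (fun b' => H (nth (a - 1) s d) b'))).
      rewrite (avg_seq_nth s d (fun a' => avg s (fun b' => H a' b'))).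
      unfold avg, Full. rewrite mult_INR.
      rewrite (sm_ext s (fun x => sm s (fun b' => H x b') / INR (length s))
        (fun x => / INR (length s) * sm s (fun b' => H x b'))) by (intros; unfold Rdiv; lra).
      rewrite sm_scal. unfold Rdiv. rewrite Rinv_mult. lra. }
  rewrite avg_scal. unfold avg at 1. fold (U H r (pairs m)). rewrite choose_pair.
  pose proof (full_eq H (pairs m)) as Hfe.
  assert (HD : Dg H (pairs m) = sm (seq 1 m) (fun x => sm (seq 1 m) (fun y => g x y))).
  { unfold Dg. rewrite sm_pairs. unfold H; simpl. apply sm_swap. }
  assert (HF : Full H (pairs m) = INR (m * m) * sm (seq 1 m) (fun x => sm (seq 1 m) (fun y => g x y))).
  { unfold Full. rewrite sm_pairs.
    rewrite (sm_ext _ _ (fun a => sm (seq 1 m) (fun b => INR m * sm (seq 1 m) (fun y => g b y)))).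
    2:{ intros a. apply sm_ext. intros b. rewrite sm_pairs. unfold H; simpl.
        rewrite (sm_ext _ _ (fun y => INR m * g b y)).
        - apply sm_scal.
        - intros y. rewrite sm_const, length_seq. reflexivity. }
    rewrite (sm_ext _ _ (fun a => INR m * sm (seq 1 m) (fun b => sm (seq 1 m) (fun y => g b y))))
      by (intros; apply sm_scal).
    rewrite sm_const, length_seq, mult_INR. lra. }
  assert (Hoff : off H (pairs m) = INR (m * m - 1) * sm (seq 1 m) (fun x => sm (seq 1 m) (fun y => g x y))).
  { rewrite minus_INR by nia. simpl INR. lra. }
  rewrite HD, Hoff, choose_len, pairs_len.
  set (G := sm (seq 1 m) (fun x => sm (seq 1 m) (fun y => g x y))).
  unfold avg. rewrite length_seq.
  rewrite (sm_ext _ _ (fun x => / INR m * sm (seq 1 m) (fun y => g x y))).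
  2:{ intros x. unfold Rdiv; lra. }
  rewrite sm_scal. fold G.
  destruct (pairs m) as [|x P'] eqn:EP.
  { pose proof (pairs_len m) as L. rewrite EP in L. simpl in L. nia. }
  pose proof (pairs_len m) as L. rewrite EP in L. simpl length in L.
  destruct r as [|r']; [lia|].
  pose proof (pair_count x P' r') as PC. rewrite <- L.
  replace (S (length P') - 1)%nat with (length P') by lia.
  assert (Hpos : (0 < bin (S (length P')) (S r'))%nat) by (apply bin_pos; lia).
  apply (f_equal INR) in PC. rewrite !mult_INR, plus_INR, mult_INR in PC.
  assert (H0 : INR (S (length P')) = INR m * INR m) by (rewrite <- mult_INR; f_equal; lia).
  assert (INR (S r') <> 0) by (apply not_0_INR; lia).
  assert (INR (bin (S (length P')) (S r')) <> 0) by (apply not_0_INR; lia).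
  assert (INR m <> 0) by (apply not_0_INR; lia).
  assert (Hc : INR (cc1 (S r') (x :: P')) + INR (cc2 (S r') (x :: P')) * INR (length P') =
     INR (bin (S (length P')) (S r')) * INR (S r') * INR (S r') / INR (S (length P'))).
  { rewrite <- PC. field. rewrite H0. apply Rmult_integral_contrapositive_currified; auto. }
  replace (INR (cc1 (S r') (x :: P')) * G + INR (cc2 (S r') (x :: P')) * (INR (length P') * G))
    with ((INR (cc1 (S r') (x :: P')) + INR (cc2 (S r') (x :: P')) * INR (length P')) * G) by ring.
  rewrite Hc, H0, mult_INR. field. auto.
Qed.

Definition kgood (k : nat -> nat) : Prop :=
  (forall n, (1 <= k n)%nat) /\
  (forall n, (1 <= n)%nat -> (k (n - 1) <= k n <= k (n - 1) * k (n - 1))%nat).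

Lemma kS k (Hk : kgood k) m : (1 <= k (S m) <= length (pairs (k m)))%nat.
Proof. destruct Hk as [H1 H2]. rewrite pairs_len. specialize (H2 (S m) ltac:(lia)).
  replace (S m - 1)%nat with m in H2 by lia. specialize (H1 (S m)). lia. Qed.

Lemma levels_len k N ss : In ss (levels k N) -> length ss = N.
Proof. revert ss; induction N; intros ss H; simpl in H.
  - destruct H as [<-|[]]; reflexivity.
  - apply in_flat_map in H. destruct H as [ss' [H1 H2]]. apply in_map_iff in H2.
    destruct H2 as [s [<- _]]. rewrite length_app, IHN by auto. simpl; lia. Qed.

Lemma avg_levels_S k (Hk : kgood k) m F :
  avg (levels k (S m)) F =
  avg (levels k m) (fun ss => avg (choose (k (S m)) (pairs (k m))) (fun s => F (ss ++ [s]))).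
Proof. simpl levels. rewrite avg_flat. reflexivity. apply choose_nonempty.
  pose proof (kS k Hk m). lia. Qed.

Lemma levels_ne k (Hk : kgood k) N : levels k N <> [].
Proof. induction N; simpl; [congruence|].
  destruct (levels k N) as [|ss l]; [congruence|]. simpl.
  destruct (choose (k (S N)) (pairs (k N))) eqn:E.
  - exfalso. revert E. apply choose_nonempty. pose proof (kS k Hk N); lia.
  - simpl. congruence. Qed.

Lemma Ystr_S ss q c : Ystr ss (S q) c =
  Ystr ss q (fst (nth (c - 1) (nth q ss []) (0%nat, 0%nat))) ++
  Ystr ss q (snd (nth (c - 1) (nth q ss []) (0%nat, 0%nat))).
Proof. simpl. destruct (nth (c - 1) (nth q ss []) (0%nat, 0%nat)); reflexivity. Qed.

Lemma Ystr_len ss q c : length (Ystr ss q c) = (2 ^ q)%nat.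
Proof. revert c; induction q; intros c; [reflexivity|]. rewrite Ystr_S, length_app, !IHq.
  simpl; lia. Qed.

Lemma Ystr_app ss e q c : (q <= length ss)%nat -> Ystr (ss ++ e) q c = Ystr ss q c.
Proof. revert c; induction q; intros c Hq; [reflexivity|]. rewrite !Ystr_S.
  rewrite app_nth1 by lia. rewrite !IHq by lia. reflexivity. Qed.

Lemma Ystr_top ss s c : Ystr (ss ++ [s]) (S (length ss)) c =
  Ystr ss (length ss) (fst (nth (c - 1) s (0%nat, 0%nat))) ++
  Ystr ss (length ss) (snd (nth (c - 1) s (0%nat, 0%nat))).
Proof. rewrite Ystr_S. rewrite nth_middle. rewrite !Ystr_app by lia. reflexivity. Qed.

Lemma Ystr_firstn ss M q c : (q <= M)%nat -> Ystr (firstn M ss) q c = Ystr ss q c.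
Proof. revert c; induction q; intros c Hq; [reflexivity|]. rewrite !Ystr_S.
  rewrite nth_firstn. replace (q <? M)%nat with true by (symmetry; apply Nat.ltb_lt; lia).
  rewrite !IHq by lia. reflexivity. Qed.

Lemma levels_marg k (Hk : kgood k) M N F : (M <= N)%nat ->
  avg (levels k N) (fun ss => F (firstn M ss)) = avg (levels k M) F.
Proof. intros HMN. induction N.
  - assert (M = 0%nat) by lia. subst. apply avg_ext_in. intros ss Hs.
    apply levels_len in Hs. destruct ss; simpl in *; auto; lia.
  - destruct (Nat.eq_dec M (S N)) as [->|HM].
    + apply avg_ext_in. intros ss Hs. apply levels_len in Hs. rewrite <- Hs, firstn_all. auto.
    + rewrite avg_levels_S by auto. rewrite <- IHN by lia. apply avg_ext_in. intros ss Hs.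
      apply levels_len in Hs. rewrite (avg_ext _ _ (fun _ => F (firstn M ss))).
      * apply avg_const, choose_nonempty. pose proof (kS k Hk N); lia.
      * intros s. rewrite firstn_app. replace (M - length ss)%nat with 0%nat by lia.
        rewrite app_nil_r. reflexivity. Qed.

Definition blk (n t : nat) (w : list nat) : list nat := firstn (2 ^ n) (skipn (t * 2 ^ n) w).

Lemma blk_app_l n d t A B : length A = (2 ^ d * 2 ^ n)%nat -> (t < 2 ^ d)%nat ->
  blk n t (A ++ B) = blk n t A.
Proof. intros HA Ht. unfold blk. rewrite skipn_app, firstn_app. rewrite length_skipn.
  replace (2 ^ n - (length A - t * 2 ^ n))%nat with 0%nat.
  - simpl. rewrite app_nil_r. reflexivity.
  - rewrite HA. assert (t * 2 ^ n + 2 ^ n <= 2 ^ d * 2 ^ n)%nat by nia. lia. Qed.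

Lemma blk_app_r n d t A B : length A = (2 ^ d * 2 ^ n)%nat -> (2 ^ d <= t)%nat ->
  blk n t (A ++ B) = blk n (t - 2 ^ d) B.
Proof. intros HA Ht. unfold blk. rewrite skipn_app. rewrite skipn_all2 by nia. simpl.
  rewrite HA, Nat.mul_sub_distr_r. reflexivity. Qed.

Lemma blk_full n w : length w = (2 ^ n)%nat -> blk n 0 w = w.
Proof. intros H. unfold blk. simpl. rewrite <- H. apply firstn_all. Qed.

Definition DY k n (g : list nat -> R) :=
  avg (levels k n) (fun ss => avg (seq 1 (k n)) (fun c => g (Ystr ss n c))).
Definition D2 k n (g : list nat -> R) :=
  avg (levels k n) (fun ss => avg (seq 1 (k n)) (fun a => avg (seq 1 (k n))
    (fun b => g (Ystr ss n a ++ Ystr ss n b)))).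

(* step: uniform c at level S m gives uniform pair at level m *)
Lemma step_single k (Hk : kgood k) m (G : list (list (nat * nat)) -> nat -> nat -> R) :
  avg (levels k (S m)) (fun ss => avg (seq 1 (k (S m))) (fun c =>
     G (firstn m ss) (fst (nth (c - 1) (nth m ss []) (0%nat, 0%nat)))
                    (snd (nth (c - 1) (nth m ss []) (0%nat, 0%nat)))))
  = avg (levels k m) (fun ss => avg (seq 1 (k m)) (fun a => avg (seq 1 (k m)) (fun b => G ss a b))).
Proof. rewrite avg_levels_S by auto. apply avg_ext_in. intros ss Hs. apply levels_len in Hs.
  rewrite (avg_ext _ _ (fun s => avg (seq 1 (k (S m))) (fun c =>
     (fun p => G ss (fst p) (snd p)) (nth (c - 1) s (0%nat, 0%nat))))).
  2:{ intros s. apply avg_ext. intros c. rewrite firstn_app, <- Hs, firstn_all, Nat.sub_diag.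
      simpl. rewrite app_nil_r. rewrite nth_middle. reflexivity. }
  rewrite (single_avg (pairs (k m)) (k (S m)) (0%nat, 0%nat) (fun p => G ss (fst p) (snd p))) by (apply kS; auto).
  rewrite avg_pairs by (apply Hk). reflexivity. Qed.

Lemma step_pair k (Hk : kgood k) m (G : list (list (nat * nat)) -> nat -> nat -> R) :
  avg (levels k (S m)) (fun ss => avg (seq 1 (k (S m))) (fun a => avg (seq 1 (k (S m))) (fun b =>
     G (firstn m ss) (snd (nth (a - 1) (nth m ss []) (0%nat, 0%nat)))
                    (fst (nth (b - 1) (nth m ss []) (0%nat, 0%nat))))))
  = avg (levels k m) (fun ss => avg (seq 1 (k m)) (fun a => avg (seq 1 (k m)) (fun b => G ss a b))).
Proof. rewrite avg_levels_S by auto. apply avg_ext_in. intros ss Hs. apply levels_len in Hs.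
  rewrite (avg_ext _ _ (fun s => avg (seq 1 (k (S m))) (fun a => avg (seq 1 (k (S m))) (fun b =>
     G ss (snd (nth (a - 1) s (0%nat, 0%nat))) (fst (nth (b - 1) s (0%nat, 0%nat))))))).
  2:{ intros s. apply avg_ext. intros a. apply avg_ext. intros b.
      rewrite firstn_app, <- Hs, firstn_all, Nat.sub_diag.
      simpl. rewrite app_nil_r. rewrite nth_middle. reflexivity. }
  pose proof (kS k Hk m) as HkS. rewrite pairs_len in HkS.
  rewrite (pair_avg (k m) (k (S m)) (0%nat, 0%nat) (G ss)) by lia. reflexivity. Qed.

Lemma step_single' k (Hk : kgood k) m (G : list (list (nat * nat)) -> nat -> nat -> R) :
  (forall ss a b, G ss a b = G (firstn m ss) a b) ->
  avg (levels k (S m)) (fun ss => avg (seq 1 (k (S m))) (fun c =>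
     G ss (fst (nth (c - 1) (nth m ss []) (0%nat, 0%nat)))
          (snd (nth (c - 1) (nth m ss []) (0%nat, 0%nat)))))
  = avg (levels k m) (fun ss => avg (seq 1 (k m)) (fun a => avg (seq 1 (k m)) (fun b => G ss a b))).
Proof. intros HG. rewrite <- (step_single k Hk m G). apply avg_ext; intros ss; apply avg_ext; intros c.
  apply HG. Qed.

Lemma step_pair' k (Hk : kgood k) m (G : list (list (nat * nat)) -> nat -> nat -> R) :
  (forall ss a b, G ss a b = G (firstn m ss) a b) ->
  avg (levels k (S m)) (fun ss => avg (seq 1 (k (S m))) (fun a => avg (seq 1 (k (S m))) (fun b =>
     G ss (snd (nth (a - 1) (nth m ss []) (0%nat, 0%nat)))
          (fst (nth (b - 1) (nth m ss []) (0%nat, 0%nat))))))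
  = avg (levels k m) (fun ss => avg (seq 1 (k m)) (fun a => avg (seq 1 (k m)) (fun b => G ss a b))).
Proof. intros HG. rewrite <- (step_pair k Hk m G). apply avg_ext; intros ss; apply avg_ext; intros a.
  apply avg_ext; intros b. apply HG. Qed.

Lemma D2_DY k (Hk : kgood k) m F : DY k (S m) F = D2 k m F.
Proof. unfold DY, D2.
  pose proof (step_single' k Hk m (fun ss a b => F (Ystr ss m a ++ Ystr ss m b))) as E.
  cbv beta in E. rewrite <- E.
  - apply avg_ext; intros ss; apply avg_ext; intros c. rewrite Ystr_S. reflexivity.
  - intros; rewrite !Ystr_firstn; auto. Qed.

Lemma len_split d n ss m c : m = (n + d)%nat -> length (Ystr ss m c) = (2 ^ d * 2 ^ n)%nat.
Proof. intros ->. rewrite Ystr_len, Nat.pow_add_r. lia. Qed.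

Lemma avg_const_in {A} (l : list A) f c : l <> [] -> (forall x, In x l -> f x = c) -> avg l f = c.
Proof. intros Hl H. rewrite (avg_ext_in _ _ (fun _ => c)) by auto. apply avg_const; auto. Qed.

Lemma BL k (Hk : kgood k) n g : forall d t, (t < 2 ^ d)%nat ->
  DY k (n + d) (fun w => g (blk n t w)) = DY k n g.
Proof. induction d; intros t Ht.
  - rewrite Nat.add_0_r. simpl in Ht. assert (t = 0%nat) by lia. subst.
    unfold DY. apply avg_ext; intros ss; apply avg_ext; intros c. rewrite blk_full; auto.
    apply Ystr_len.
  - rewrite Nat.add_succ_r, D2_DY by auto. unfold D2.
    destruct (Nat.lt_ge_cases t (2 ^ d)) as [Hl|Hr].
    + rewrite <- (IHd t Hl). unfold DY. apply avg_ext; intros ss. apply avg_ext; intros a.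
      apply avg_const_in. apply seq_ne, Hk. intros b _.
      rewrite (blk_app_l n d); auto. apply len_split; auto.
    + assert (t - 2 ^ d < 2 ^ d)%nat by (simpl in Ht; lia).
      rewrite <- (IHd (t - 2 ^ d)%nat H). unfold DY. apply avg_ext; intros ss.
      apply avg_const_in. apply seq_ne, Hk. intros a _.
      apply avg_ext; intros b.
      rewrite (blk_app_r n d); auto. apply len_split; auto. Qed.

Lemma SL k (Hk : kgood k) n g : forall d,
  avg (levels k (n + d)) (fun ss => avg (seq 1 (k (n + d)%nat)) (fun a => avg (seq 1 (k (n + d)%nat))
     (fun b => g (blk n (2 ^ d - 1) (Ystr ss (n + d) a) ++ blk n 0 (Ystr ss (n + d) b)))))
  = D2 k n g.
Proof. induction d.
  - rewrite Nat.add_0_r. unfold D2. apply avg_ext; intros ss; apply avg_ext; intros a;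
    apply avg_ext; intros b. simpl. rewrite !blk_full by apply Ystr_len. reflexivity.
  - rewrite <- IHd. rewrite Nat.add_succ_r.
    pose proof (step_pair' k Hk (n + d) (fun ss u v =>
       g (blk n (2 ^ d - 1) (Ystr ss (n + d) u) ++ blk n 0 (Ystr ss (n + d) v)))) as E.
    cbv beta in E. rewrite <- E.
    + apply avg_ext; intros ss; apply avg_ext; intros a; apply avg_ext; intros b. rewrite !Ystr_S.
      assert (0 < 2 ^ d)%nat by (apply Nat.neq_0_lt_0, Nat.pow_nonzero; lia).
      rewrite (blk_app_r n d), (blk_app_l n d); try apply len_split; auto.
      * simpl. f_equal. f_equal. f_equal. lia.
      * simpl. lia.
    + intros; rewrite !Ystr_firstn; auto. Qed.

Lemma PL k (Hk : kgood k) n g : forall d t, (S t < 2 ^ d)%nat ->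
  DY k (n + d) (fun w => g (blk n t w ++ blk n (S t) w)) = D2 k n g.
Proof. induction d; intros t Ht.
  - simpl in Ht; lia.
  - rewrite Nat.add_succ_r, D2_DY by auto. unfold D2 at 1.
    assert (Hp : (0 < 2 ^ d)%nat) by (apply Nat.neq_0_lt_0, Nat.pow_nonzero; lia).
    assert (Hd : (2 ^ S d = 2 * 2 ^ d)%nat) by reflexivity.
    destruct (Nat.lt_ge_cases (S t) (2 ^ d)) as [Hl|Hr].
    + rewrite <- (IHd t Hl). unfold DY. apply avg_ext; intros ss. apply avg_ext; intros a.
      apply avg_const_in. apply seq_ne, Hk. intros b _.
      rewrite !(blk_app_l n d); auto; try lia; apply len_split; auto.
    + destruct (Nat.eq_dec t (2 ^ d - 1)) as [Ht1|Ht1].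
      * rewrite <- (SL k Hk n g d). apply avg_ext; intros ss. apply avg_ext; intros a.
        apply avg_ext; intros b.
        rewrite (blk_app_l n d), (blk_app_r n d (S t)); try lia; try apply len_split; auto.
        subst t. replace (S (2 ^ d - 1) - 2 ^ d)%nat with 0%nat by lia. reflexivity.
      * assert (S (t - 2 ^ d) < 2 ^ d)%nat by lia.
        rewrite <- (IHd (t - 2 ^ d)%nat H). unfold DY. apply avg_ext; intros ss.
        apply avg_const_in. apply seq_ne, Hk. intros a _.
        apply avg_ext; intros b.
        rewrite !(blk_app_r n d); try lia; try apply len_split; auto.
        replace (S t - 2 ^ d)%nat with (S (t - 2 ^ d)) by lia. reflexivity. Qed.

Lemma list_prod_flat {A B} (l : list A) (m : list B) :
  list_prod l m = flat_map (fun a => map (fun b => (a, b)) m) l.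
Proof. induction l; simpl; auto. rewrite IHl; auto. Qed.

Lemma avg_prod {A B} (l : list A) (m : list B) f : m <> [] ->
  avg (list_prod l m) f = avg l (fun a => avg m (fun b => f (a, b))).
Proof. intros Hm. rewrite list_prod_flat, avg_flat; auto. Qed.

Lemma avg_map {A B} (l : list A) (h : A -> B) f : avg (map h l) f = avg l (fun x => f (h x)).
Proof. unfold avg. rewrite sm_map, length_map. reflexivity. Qed.

Lemma cvals_len k N cs : In cs (cvals k N) -> length cs = S N.
Proof. revert cs; induction N; intros cs H; simpl in H.
  - apply in_map_iff in H. destruct H as [c [<- _]]. reflexivity.
  - apply in_flat_map in H. destruct H as [cs' [H1 H2]]. apply in_map_iff in H2.
    destruct H2 as [c [<- _]]. rewrite length_app, IHN by auto. simpl; lia. Qed.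

Lemma avg_cvals_S k (Hk : kgood k) N F :
  avg (cvals k (S N)) F = avg (cvals k N) (fun cs => avg (seq 1 (k (S N))) (fun c => F (cs ++ [c]))).
Proof. simpl cvals. rewrite avg_flat. reflexivity. apply seq_ne, Hk. Qed.

Lemma cvals_ne k (Hk : kgood k) N : cvals k N <> [].
Proof. induction N; simpl.
  - pose proof (seq_ne (k 0%nat) (proj1 Hk 0%nat)). destruct (seq 1 (k 0%nat)); simpl; congruence.
  - destruct (cvals k N) as [|cs l]; [congruence|]. simpl.
    pose proof (seq_ne (k (S N)) (proj1 Hk (S N))). destruct (seq 1 (k (S N))); simpl; congruence.
Qed.

Lemma CV1 k (Hk : kgood k) q N f : (q <= N)%nat ->
  avg (cvals k N) (fun cs => f (nth q cs 0%nat)) = avg (seq 1 (k q)) f.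
Proof. induction N; intros Hq.
  - assert (q = 0%nat) by lia. subst. simpl cvals. rewrite avg_map. reflexivity.
  - rewrite avg_cvals_S by auto. destruct (Nat.eq_dec q (S N)) as [->|Hne].
    + apply avg_const_in. apply cvals_ne; auto. intros cs Hcs. apply cvals_len in Hcs.
      apply avg_ext; intros c. rewrite <- Hcs, nth_middle. reflexivity.
    + rewrite <- IHN by lia. apply avg_ext_in. intros cs Hcs. apply cvals_len in Hcs.
      apply avg_const_in. apply seq_ne, Hk. intros c _. rewrite app_nth1 by lia. reflexivity. Qed.

Lemma CV2 k (Hk : kgood k) q N f : (S q <= N)%nat ->
  avg (cvals k N) (fun cs => f (nth q cs 0%nat) (nth (S q) cs 0%nat)) =
  avg (seq 1 (k q)) (fun a => avg (seq 1 (k (S q))) (fun b => f a b)).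
Proof. induction N; intros Hq; [lia|].
  rewrite avg_cvals_S by auto. destruct (Nat.eq_dec q N) as [->|Hne].
  - rewrite <- (CV1 k Hk N N (fun a => avg (seq 1 (k (S N))) (fun b => f a b))) by lia.
    apply avg_ext_in. intros cs Hcs. apply cvals_len in Hcs.
    apply avg_ext; intros c. rewrite app_nth1 by lia. rewrite <- Hcs, nth_middle. reflexivity.
  - rewrite <- IHN by lia. apply avg_ext_in. intros cs Hcs. apply cvals_len in Hcs.
    apply avg_const_in. apply seq_ne, Hk. intros c _. rewrite !app_nth1 by lia. reflexivity. Qed.

Definition Yq (w : list (list (nat * nat)) * list nat) (q : nat) : list nat :=
  Ystr (fst w) q (nth q (snd w) 0%nat).

Lemma pre_len w q : length (flat_map (Yq w) (seq 0 q)) = (2 ^ q - 1)%nat.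
Proof. induction q; [reflexivity|]. rewrite seq_S, flat_map_app, length_app, IHq. simpl.
  rewrite app_nil_r. unfold Yq. rewrite Ystr_len.
  assert (0 < 2 ^ q)%nat by (apply Nat.neq_0_lt_0, Nat.pow_nonzero; lia). lia. Qed.

Lemma prefix_split N w q : (q <= N)%nat ->
  prefix N w = flat_map (Yq w) (seq 0 q) ++ Yq w q ++ flat_map (Yq w) (seq (S q) (N - q)).
Proof. intros Hq. unfold prefix. replace (S N) with (q + S (N - q))%nat by lia.
  rewrite seq_app, flat_map_app. simpl. reflexivity. Qed.

Lemma GL1 (A Y B : list nat) a b : (b + a <= length Y)%nat ->
  firstn a (skipn (length A + b) (A ++ Y ++ B)) = firstn a (skipn b Y).
Proof. intros H. rewrite skipn_app. rewrite skipn_all2 by lia. simpl.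
  replace (length A + b - length A)%nat with b by lia.
  rewrite skipn_app. replace (b - length Y)%nat with 0%nat by lia. simpl.
  rewrite firstn_app, length_skipn. replace (a - (length Y - b))%nat with 0%nat by lia.
  simpl. rewrite app_nil_r. reflexivity. Qed.

Lemma firstn_add {T} (M : list T) a b : firstn (a + b) M = firstn a M ++ firstn b (skipn a M).
Proof. revert M; induction a; intros M; [reflexivity|]. destruct M; simpl.
  - destruct b; reflexivity.
  - f_equal. apply IHa. Qed.

Lemma firstn_add_skipn {T} (L : list T) x a b :
  firstn (a + b) (skipn x L) = firstn a (skipn x L) ++ firstn b (skipn (x + a) L).
Proof. rewrite firstn_add, skipn_skipn, Nat.add_comm. reflexivity. Qed.

Lemma log2_facts j : (1 <= j)%nat -> (2 ^ Nat.log2 j <= j < 2 * 2 ^ Nat.log2 j)%nat.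
Proof. intros H. pose proof (Nat.log2_spec j ltac:(lia)). simpl in H0. lia. Qed.

Lemma BW N w n j : (1 <= j)%nat -> (n + Nat.log2 j <= N)%nat ->
  window N w (j * 2 ^ n) (2 ^ n) = blk n (j - 2 ^ Nat.log2 j) (Yq w (n + Nat.log2 j)).
Proof. intros Hj HN. set (e := Nat.log2 j) in *. pose proof (log2_facts j Hj) as [H1 H2]. fold e in H1, H2.
  unfold window. rewrite (prefix_split N w (n + e)) by lia.
  assert (E : (j * 2 ^ n - 1 = length (flat_map (Yq w) (seq 0 (n + e))) + (j - 2 ^ e) * 2 ^ n)%nat).
  { rewrite pre_len, Nat.pow_add_r, Nat.mul_sub_distr_r.
    assert (0 < 2 ^ n)%nat by (apply Nat.neq_0_lt_0, Nat.pow_nonzero; lia).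
    assert (2 ^ e * 2 ^ n <= j * 2 ^ n)%nat by nia. nia. }
  rewrite E, GL1. reflexivity.
  unfold Yq. rewrite Ystr_len, Nat.pow_add_r. nia. Qed.

Lemma pow2_pos n : (0 < 2 ^ n)%nat.
Proof. apply Nat.neq_0_lt_0, Nat.pow_nonzero; lia. Qed.

Lemma PW_split N w n j : 
  window N w (j * 2 ^ n) (2 ^ S n) =
  window N w (j * 2 ^ n) (2 ^ n) ++ firstn (2 ^ n) (skipn (j * 2 ^ n - 1 + 2 ^ n) (prefix N w)).
Proof. unfold window. replace (2 ^ S n)%nat with (2 ^ n + 2 ^ n)%nat by (simpl; lia).
  apply firstn_add_skipn. Qed.

Lemma PW1 N w n j : (1 <= j)%nat -> (n + Nat.log2 j + 1 <= N)%nat ->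
  (S (j - 2 ^ Nat.log2 j) < 2 ^ Nat.log2 j)%nat ->
  window N w (j * 2 ^ n) (2 ^ S n) =
  blk n (j - 2 ^ Nat.log2 j) (Yq w (n + Nat.log2 j)) ++
  blk n (S (j - 2 ^ Nat.log2 j)) (Yq w (n + Nat.log2 j)).
Proof. intros Hj HN Ht. rewrite PW_split, BW by lia. f_equal.
  set (e := Nat.log2 j) in *. pose proof (log2_facts j Hj) as [H1 H2]. fold e in H1, H2.
  rewrite (prefix_split N w (n + e)) by lia.
  pose proof (pow2_pos n).
  assert (E : (j * 2 ^ n - 1 + 2 ^ n = length (flat_map (Yq w) (seq 0 (n + e))) + S (j - 2 ^ e) * 2 ^ n)%nat).
  { rewrite pre_len, Nat.pow_add_r. 
    assert (2 ^ e * 2 ^ n <= j * 2 ^ n)%nat by nia.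
    replace (S (j - 2 ^ e) * 2 ^ n)%nat with ((j - 2 ^ e) * 2 ^ n + 2 ^ n)%nat by lia.
    rewrite Nat.mul_sub_distr_r. nia. }
  rewrite E, GL1. reflexivity.
  unfold Yq. rewrite Ystr_len, Nat.pow_add_r. nia. Qed.

Lemma PW2 N w n j : (1 <= j)%nat -> (n + Nat.log2 j + 1 <= N)%nat ->
  ~ (S (j - 2 ^ Nat.log2 j) < 2 ^ Nat.log2 j)%nat ->
  window N w (j * 2 ^ n) (2 ^ S n) =
  blk n (j - 2 ^ Nat.log2 j) (Yq w (n + Nat.log2 j)) ++
  blk n 0 (Yq w (S (n + Nat.log2 j))).
Proof. intros Hj HN Ht. rewrite PW_split, BW by lia. f_equal.
  set (e := Nat.log2 j) in *. pose proof (log2_facts j Hj) as [H1 H2]. fold e in H1, H2.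
  rewrite (prefix_split N w (S (n + e))) by lia.
  pose proof (pow2_pos n).
  assert (E : (j * 2 ^ n - 1 + 2 ^ n = length (flat_map (Yq w) (seq 0 (S (n + e)))) + 0)%nat).
  { rewrite pre_len. assert (j = 2 ^ e + (2 ^ e - 1))%nat by lia.
    replace (2 ^ S (n + e))%nat with (2 * (2 ^ e * 2 ^ n))%nat by (rewrite <- Nat.pow_add_r; simpl; rewrite (Nat.add_comm e n); lia).
    pose proof (pow2_pos e). nia. }
  rewrite E, GL1. unfold blk. reflexivity.
  unfold Yq. rewrite Ystr_len. simpl. rewrite Nat.pow_add_r. pose proof (pow2_pos e). nia. Qed.

Lemma EP_avg k N f : EP k N f = avg (Omega k N) f.
Proof. reflexivity. Qed.

Lemma marg_Y k (Hk : kgood k) q N (F : list (list (nat * nat)) -> R) :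
  (q <= N)%nat -> (forall ss, F ss = F (firstn q ss)) ->
  avg (levels k N) F = avg (levels k q) F.
Proof. intros Hq HF. rewrite <- (levels_marg k Hk q N F Hq). apply avg_ext; auto. Qed.

Lemma EBW k (Hk : kgood k) N n j g : (1 <= j)%nat -> (n + Nat.log2 j <= N)%nat ->
  avg (Omega k N) (fun w => g (window N w (j * 2 ^ n) (2 ^ n))) = DY k n g.
Proof. intros Hj HN. rewrite (avg_ext _ _ (fun w => g (blk n (j - 2 ^ Nat.log2 j) (Yq w (n + Nat.log2 j)))))
    by (intros; rewrite BW; auto).
  set (e := Nat.log2 j) in *. set (t := (j - 2 ^ e)%nat).
  unfold Omega. rewrite avg_prod by (apply cvals_ne; auto). unfold Yq; simpl.
  rewrite (avg_ext _ _ (fun ss => avg (seq 1 (k (n + e)%nat)) (fun c => g (blk n t (Ystr ss (n + e) c)))))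
    by (intros ss; apply (CV1 k Hk (n + e) N (fun c => g (blk n t (Ystr ss (n + e) c)))); lia).
  rewrite (marg_Y k Hk (n + e)) by (auto; intros; apply avg_ext; intros; rewrite Ystr_firstn; auto).
  fold (DY k (n + e) (fun w => g (blk n t w))). apply BL; auto.
  pose proof (log2_facts j Hj). fold e in H. simpl in H. unfold t. lia. Qed.

Lemma EPW k (Hk : kgood k) N n j g : (1 <= j)%nat -> (n + Nat.log2 j + 1 <= N)%nat ->
  avg (Omega k N) (fun w => g (window N w (j * 2 ^ n) (2 ^ S n))) = D2 k n g.
Proof. intros Hj HN. pose proof (log2_facts j Hj) as Hl.
  set (e := Nat.log2 j) in *. set (t := (j - 2 ^ e)%nat). simpl in Hl.
  unfold Omega. rewrite avg_prod by (apply cvals_ne; auto).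
  destruct (Nat.lt_ge_cases (S t) (2 ^ e)) as [Ht|Ht].
  - rewrite (avg_ext _ _ (fun ss => avg (cvals k N) (fun cs =>
       g (blk n t (Ystr ss (n + e) (nth (n + e) cs 0%nat)) ++ blk n (S t) (Ystr ss (n + e) (nth (n + e) cs 0%nat))))))
      by (intros; apply avg_ext; intros; rewrite PW1; auto).
    rewrite (avg_ext _ _ (fun ss => avg (seq 1 (k (n + e)%nat)) (fun c =>
       g (blk n t (Ystr ss (n + e) c) ++ blk n (S t) (Ystr ss (n + e) c)))))
      by (intros ss; apply (CV1 k Hk (n + e) N (fun c => g (blk n t (Ystr ss (n + e) c) ++ blk n (S t) (Ystr ss (n + e) c)))); lia).
    rewrite (marg_Y k Hk (n + e)) by (try lia; intros; apply avg_ext; intros; rewrite !Ystr_firstn; auto).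
    fold (DY k (n + e) (fun w => g (blk n t w ++ blk n (S t) w))). apply PL; auto.
  - assert (Ht' : t = (2 ^ e - 1)%nat) by lia.
    rewrite (avg_ext _ _ (fun ss => avg (cvals k N) (fun cs =>
       g (blk n t (Ystr ss (n + e) (nth (n + e) cs 0%nat)) ++ blk n 0 (Ystr ss (S (n + e)) (nth (S (n + e)) cs 0%nat))))))
      by (intros; apply avg_ext; intros; rewrite PW2; auto; unfold t, e in *; lia).
    rewrite (avg_ext _ _ (fun ss => avg (seq 1 (k (n + e)%nat)) (fun a => avg (seq 1 (k (S (n + e)))) (fun b =>
       g (blk n t (Ystr ss (n + e) a) ++ blk n 0 (Ystr ss (S (n + e)) b))))))
      by (intros ss; apply (CV2 k Hk (n + e) N (fun a b => g (blk n t (Ystr ss (n + e) a) ++ blk n 0 (Ystr ss (S (n + e)) b)))); lia).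
    rewrite (marg_Y k Hk (S (n + e))) by (try lia; intros; apply avg_ext; intros; apply avg_ext; intros; rewrite !Ystr_firstn; auto).
    rewrite (avg_ext _ _ (fun ss => avg (seq 1 (k (S (n + e)))) (fun b =>
       (fun ss x y => avg (seq 1 (k (n + e)%nat)) (fun a => g (blk n t (Ystr ss (n + e) a) ++ blk n 0 (Ystr ss (n + e) x))))
       ss (fst (nth (b - 1) (nth (n + e) ss []) (0%nat, 0%nat)))
          (snd (nth (b - 1) (nth (n + e) ss []) (0%nat, 0%nat)))))).
    2:{ intros ss. rewrite avg_swap. apply avg_ext; intros b. apply avg_ext; intros a.
        rewrite Ystr_S. rewrite (blk_app_l n e); auto. apply len_split; auto. apply pow2_pos. }
    pose proof (step_single' k Hk (n + e) (fun ss x y => avg (seq 1 (k (n + e)%nat)) (fun a =>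
       g (blk n t (Ystr ss (n + e) a) ++ blk n 0 (Ystr ss (n + e) x))))) as E.
    cbv beta in E. rewrite E.
    2:{ intros; apply avg_ext; intros; rewrite !Ystr_firstn; auto. }
    rewrite <- (SL k Hk n g e). apply avg_ext; intros ss.
    rewrite (avg_ext _ _ (fun x => avg (seq 1 (k (n + e)%nat))
       (fun a => g (blk n t (Ystr ss (n + e) a) ++ blk n 0 (Ystr ss (n + e) x))))).
    2:{ intros x. apply avg_const. apply seq_ne, Hk. }
    rewrite avg_swap. rewrite Ht'. reflexivity. Qed.

Lemma sm_ind_nat (l : list nat) a f : NoDup l -> In a l ->
  sm l (fun c => (if Nat.eq_dec a c then 1 else 0) * f c) = f a.
Proof. induction l as [|x l IH]; intros Hnd Hin; [destruct Hin|].
  inversion Hnd; subst. rewrite sm_cons. destruct Hin as [->|Hin].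
  - destruct (Nat.eq_dec a a); [|congruence].
    rewrite (sm_ext_in l _ (fun _ => 0)). rewrite sm_const; lra.
    intros c Hc. destruct (Nat.eq_dec a c); [subst; contradiction|lra].
  - destruct (Nat.eq_dec a x); [subst; contradiction|]. rewrite IH; auto; lra. Qed.

Lemma words_len k0 m x : In x (words k0 m) -> length x = m.
Proof. revert x; induction m; intros x H; simpl in H.
  - destruct H as [<-|[]]; reflexivity.
  - apply in_flat_map in H. destruct H as [u [H1 H2]]. apply in_map_iff in H2.
    destruct H2 as [c [<- _]]. rewrite length_app, IHm by auto. simpl; lia. Qed.

Lemma words_ind k0 : forall m w, length w = m -> over_alphabet k0 w -> forall psi,
  sm (words k0 m) (fun x => (if list_eq_dec Nat.eq_dec w x then 1 else 0) * psi x) = psi w.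
Proof. induction m; intros w Hl Ha psi.
  - destruct w; [|simpl in Hl; lia]. simpl. unfold sm; simpl.
    destruct (list_eq_dec Nat.eq_dec [] []); [lra|congruence].
  - destruct (exists_last (l := w)) as [w'' [c0 Ew]]. { destruct w; simpl in Hl; [lia|congruence]. }
    subst w. rewrite length_app in Hl. simpl in Hl.
    unfold over_alphabet in Ha. apply Forall_app in Ha. destruct Ha as [Ha1 Ha2].
    inversion Ha2; subst.
    simpl words. rewrite sm_flat.
    rewrite (sm_ext _ _ (fun u => (if list_eq_dec Nat.eq_dec w'' u then 1 else 0) *
       sm (seq 1 k0) (fun c => (if Nat.eq_dec c0 c then 1 else 0) * psi (u ++ [c])))).
    + rewrite IHm by (auto; lia). apply sm_ind_nat. apply seq_NoDup. apply in_seq. lia.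
    + intros u. rewrite sm_map. destruct (list_eq_dec Nat.eq_dec w'' u) as [<-|Hne].
      * rewrite Rmult_1_l. apply sm_ext. intros c.
        destruct (list_eq_dec Nat.eq_dec (w'' ++ [c0]) (w'' ++ [c])) as [E|E];
        destruct (Nat.eq_dec c0 c); subst; try reflexivity.
        -- apply app_inj_tail in E. destruct E; congruence.
        -- congruence.
      * rewrite Rmult_0_l. rewrite (sm_ext _ _ (fun _ => 0)). rewrite sm_const; lra.
        intros c. destruct (list_eq_dec Nat.eq_dec (w'' ++ [c0]) (u ++ [c])) as [E|E]; [|lra].
        apply app_inj_tail in E. destruct E; congruence. Qed.

Lemma levels_nth k N ss q : In ss (levels k N) -> (q < N)%nat ->
  In (nth q ss []) (choose (k (S q)) (pairs (k q))).
Proof. revert ss; induction N; intros ss H Hq; [lia|]. simpl in H.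
  apply in_flat_map in H. destruct H as [ss' [H1 H2]]. apply in_map_iff in H2.
  destruct H2 as [s [<- Hs]]. pose proof (levels_len _ _ _ H1) as Hl.
  destruct (Nat.eq_dec q N) as [->|Hne].
  - rewrite <- Hl, nth_middle. rewrite Hl. auto.
  - rewrite app_nth1 by lia. apply IHN; auto; lia. Qed.

Lemma pairs_in m p : In p (pairs m) -> (1 <= fst p <= m)%nat /\ (1 <= snd p <= m)%nat.
Proof. unfold pairs. intros H. apply in_flat_map in H. destruct H as [a [Ha H]].
  apply in_map_iff in H. destruct H as [b [<- Hb]]. apply in_seq in Ha, Hb. simpl. lia. Qed.

Lemma Ystr_alpha k (Hk : kgood k) N ss : In ss (levels k N) -> forall q c, (q <= N)%nat ->
  (1 <= c <= k q)%nat -> Forall (fun x => (1 <= x <= k 0%nat)%nat) (Ystr ss q c).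
Proof. intros Hss q. induction q; intros c Hq Hc.
  - simpl. constructor; auto.
  - rewrite Ystr_S. pose proof (levels_nth k N ss q Hss ltac:(lia)) as Hs.
    set (s := nth q ss []) in *.
    pose proof (choose_elem_len _ _ _ Hs) as Hls.
    assert (Hp : In (nth (c - 1) s (0%nat, 0%nat)) s) by (apply nth_In; lia).
    pose proof (choose_elem_incl _ _ _ _ Hs Hp) as Hpp. apply pairs_in in Hpp.
    apply Forall_app; split; apply IHq; lia. Qed.

Lemma cvals_in k N cs q : In cs (cvals k N) -> (q <= N)%nat -> (1 <= nth q cs 0 <= k q)%nat.
Proof. revert cs; induction N; intros cs H Hq; simpl in H.
  - apply in_map_iff in H. destruct H as [c [<- Hc]]. apply in_seq in Hc.
    assert (q = 0%nat) by lia. subst. simpl. lia.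
  - apply in_flat_map in H. destruct H as [cs' [H1 H2]]. apply in_map_iff in H2.
    destruct H2 as [c [<- Hc]]. apply in_seq in Hc. pose proof (cvals_len _ _ _ H1) as Hl.
    destruct (Nat.eq_dec q (S N)) as [->|Hne].
    + assert (nth (S N) (cs' ++ [c]) 0%nat = c) by (rewrite <- Hl, nth_middle; reflexivity). lia.
    + rewrite app_nth1 by lia. apply IHN; auto; lia. Qed.

Lemma prefix_alpha k (Hk : kgood k) N w : In w (Omega k N) ->
  over_alphabet (k 0%nat) (prefix N w).
Proof. intros Hw. unfold Omega in Hw. destruct w as [ss cs]. apply in_prod_iff in Hw.
  destruct Hw as [Hss Hcs]. unfold over_alphabet, prefix. apply Forall_forall. intros x Hx.
  apply in_flat_map in Hx. destruct Hx as [q [Hq Hx]]. apply in_seq in Hq. simpl in Hx.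
  assert (HF := Ystr_alpha k Hk N ss Hss q (nth q cs 0%nat) ltac:(lia) (cvals_in k N cs q Hcs ltac:(lia))).
  rewrite Forall_forall in HF. apply HF. exact Hx. Qed.

Lemma Forall_firstn_skipn {T} (P : T -> Prop) l a b : Forall P l -> Forall P (firstn a (skipn b l)).
Proof. intros H. rewrite <- (firstn_skipn b l) in H. apply Forall_app in H. destruct H as [_ H].
  rewrite <- (firstn_skipn a (skipn b l)) in H. apply Forall_app in H. tauto. Qed.

Lemma window_alpha k (Hk : kgood k) N w a len : In w (Omega k N) ->
  over_alphabet (k 0%nat) (window N w a len).
Proof. intros Hw. unfold window. apply Forall_firstn_skipn, prefix_alpha; auto. Qed.

Lemma prefix_len N w : length (prefix N w) = (2 ^ S N - 1)%nat.
Proof. unfold prefix. change (fun n => Ystr (fst w) n (nth n (snd w) 0%nat)) with (Yq w).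
  apply pre_len. Qed.

Lemma window_len N w a len : (a - 1 + len <= 2 ^ S N - 1)%nat -> length (window N w a len) = len.
Proof. intros H. unfold window. rewrite length_firstn, length_skipn, prefix_len. lia. Qed.

Lemma substr_fs (l : list nat) a b : substring (firstn a (skipn b l)) l.
Proof. exists (firstn b l), (skipn a (skipn b l)). rewrite firstn_skipn, firstn_skipn. reflexivity. Qed.

Lemma sub_win (L : list nat) a b a' b' : (b <= b')%nat -> (b' + a' <= b + a)%nat ->
  substring (firstn a' (skipn b' L)) (firstn a (skipn b L)).
Proof. intros H1 H2.
  replace (firstn a' (skipn b' L)) with (firstn a' (skipn (b' - b) (firstn a (skipn b L)))).
  - apply substr_fs.
  - rewrite skipn_firstn_comm, firstn_firstn, skipn_skipn.
    replace (b' - b + b)%nat with b' by lia. f_equal. lia. Qed.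

Lemma EX_avg k a len g : EX k a len g = avg (Omega k (a + len)) (fun w => g (window (a + len) w a len)).
Proof. reflexivity. Qed.

Lemma win_len_ok i L : (i - 1 + L <= 2 ^ S (i + L) - 1)%nat.
Proof. pose proof (Nat.pow_gt_lin_r 2 (i + L) ltac:(lia)). simpl. lia. Qed.

Lemma sum_Pwin k (Hk : kgood k) phi L i :
  sm (words (k 0%nat) L) (fun x => Pwin k i x * phi x) = EX k i L phi.
Proof.
  rewrite (sm_ext_in _ _ (fun x => avg (Omega k (i + L)) (fun w =>
     (if list_eq_dec Nat.eq_dec (window (i + L) w i L) x then 1 else 0) * phi x))).
  2:{ intros x Hx. unfold Pwin. rewrite (words_len _ _ _ Hx). rewrite EX_avg. cbv beta.
      rewrite (avg_ext _ (fun w => (if list_eq_dec Nat.eq_dec (window (i + L) w i L) x then 1 else 0) * phi x)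
         (fun w => phi x * (if list_eq_dec Nat.eq_dec (window (i + L) w i L) x then 1 else 0)))
        by (intros; lra).
      rewrite avg_scal. lra. }
  rewrite <- avg_sm. rewrite EX_avg. apply avg_ext_in. intros w Hw.
  apply words_ind.
  - apply window_len, win_len_ok.
  - apply window_alpha; auto. Qed.

Lemma ces_sum k (Hk : kgood k) phi L N :
  sm (words (k 0%nat) L) (fun x => cesaro k x N * phi x) =
  sm (seq 1 (S N)) (fun i => EX k i L phi) / INR (S N).
Proof. unfold cesaro.
  rewrite (sm_ext _ _ (fun x => / INR (S N) * sm (seq 1 (S N)) (fun i => Pwin k i x * phi x))).
  2:{ intros x. change (sumR (map (fun i => Pwin k i x) (seq 1 (S N)))) with (sm (seq 1 (S N)) (fun i => Pwin k i x)).
      rewrite (sm_ext _ (fun i => Pwin k i x * phi x) (fun i => phi x * Pwin k i x)) by (intros; lra).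
      rewrite sm_scal. unfold Rdiv. lra. }
  rewrite sm_scal, sm_swap. unfold Rdiv. rewrite Rmult_comm. f_equal.
  apply sm_ext. intros i. apply sum_Pwin; auto. Qed.

Lemma cv_const c : Un_cv (fun _ => c) c.
Proof. intros eps He. exists 0%nat. intros. unfold R_dist. rewrite Rminus_diag, Rabs_R0. auto. Qed.

Lemma lim_sm {T} (W : list T) (u : T -> nat -> R) (l : T -> R) (c : T -> R) :
  (forall x, Un_cv (u x) (l x)) ->
  Un_cv (fun N => sm W (fun x => u x N * c x)) (sm W (fun x => l x * c x)).
Proof. intros H. induction W.
  - unfold sm; simpl. apply cv_const.
  - rewrite sm_cons. apply (Un_cv_ext (fun N => u a N * c a + sm W (fun x => u x N * c x))).
    + intros; rewrite sm_cons; reflexivity.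
    + apply CV_plus; auto. apply CV_mult; auto. apply cv_const. Qed.

Lemma lim_lb v l A : (forall N, A <= v N) -> Un_cv v l -> A <= l.
Proof. intros H Hc. destruct (Rle_lt_dec A l) as [|Hlt]; auto.
  destruct (Hc (A - l) ltac:(lra)) as [N0 HN]. specialize (HN N0 ltac:(lia)).
  unfold R_dist in HN. specialize (H N0). apply Rabs_def2 in HN. lra. Qed.

Lemma lim_ub v l B K : (forall N, v N <= B + K / INR (S N)) -> Un_cv v l -> l <= B.
Proof. intros H Hc. destruct (Rle_lt_dec l B) as [|Hlt]; auto.
  set (eps := (l - B) / 2). assert (He : eps > 0) by (unfold eps; lra).
  destruct (Hc eps He) as [N0 HN].
  destruct (INR_archimed eps K He) as [N1 HN1].
  set (N := (N0 + N1)%nat). specialize (HN N ltac:(unfold N; lia)).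
  unfold R_dist in HN. apply Rabs_def2 in HN. specialize (H N).
  assert (INR N1 <= INR (S N)) by (apply le_INR; unfold N; lia).
  assert (0 < INR (S N)) by (apply lt_0_INR; lia).
  assert (K / INR (S N) < eps).
  { apply Rmult_lt_reg_r with (INR (S N)); auto. unfold Rdiv. rewrite Rmult_assoc, Rinv_l by lra.
    assert (eps * INR N1 <= eps * INR (S N)) by (apply Rmult_le_compat_l; lra). nra. }
  unfold eps in *. lra. Qed.

Lemma avg_seq_lb (E : nat -> R) A N : (forall i, (1 <= i)%nat -> A <= E i) ->
  A <= sm (seq 1 (S N)) E / INR (S N).
Proof. intros H. assert (0 < INR (S N)) by (apply lt_0_INR; lia).
  apply Rmult_le_reg_r with (INR (S N)); auto. unfold Rdiv. rewrite Rmult_assoc, Rinv_l by lra.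
  rewrite Rmult_1_r. rewrite <- (length_seq (S N) 1) at 1. rewrite Rmult_comm, <- sm_const.
  apply sm_le. intros i Hi. apply in_seq in Hi. apply H; lia. Qed.

Lemma sm_seq_f (f : nat -> R) L M : (forall i, 0 <= f i) -> (forall i, (L <= i)%nat -> f i = 0) ->
  sm (seq 1 M) f <= sm (seq 1 L) f.
Proof. intros Hnn Hz. destruct (Nat.le_gt_cases M L).
  - replace (seq 1 L) with (seq 1 (M + (L - M))) by (f_equal; lia). rewrite seq_app, sm_app.
    assert (0 <= sm (seq (1 + M) (L - M)) f).
    { replace 0 with (sm (seq (1 + M) (L - M)) (fun _ => 0)) by (rewrite sm_const; lra). apply sm_le; intros; auto. } lra.
  - replace M with (L + (M - L))%nat by lia. rewrite seq_app, sm_app.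
    rewrite (sm_ext_in (seq (1 + L) (M - L)) f (fun _ => 0)).
    + rewrite sm_const. lra.
    + intros i Hi. apply in_seq in Hi. apply Hz; lia. Qed.

Lemma avg_seq_ub (E : nat -> R) B L : (forall i, (L <= i)%nat -> E i <= B) ->
  forall N, sm (seq 1 (S N)) E / INR (S N) <=
    B + sm (seq 1 L) (fun i => if (i <? L)%nat then Rmax 0 (E i - B) else 0) / INR (S N).
Proof. intros H N. set (f := fun i => if (i <? L)%nat then Rmax 0 (E i - B) else 0).
  assert (0 < INR (S N)) by (apply lt_0_INR; lia).
  assert (Hf : sm (seq 1 (S N)) E <= sm (seq 1 (S N)) (fun i => B + f i)).
  { apply sm_le. intros i _. unfold f. destruct (Nat.ltb_spec i L).
    - pose proof (Rmax_r 0 (E i - B)). lra.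
    - specialize (H i H1). lra. }
  rewrite sm_plus, sm_const, length_seq in Hf.
  assert (sm (seq 1 (S N)) f <= sm (seq 1 L) f).
  { apply sm_seq_f.
    - intros i. unfold f. destruct (i <? L)%nat; [apply Rmax_l|lra].
    - intros i Hi. unfold f. destruct (Nat.ltb_spec i L); [lia|auto]. }
  apply Rmult_le_reg_r with (INR (S N)); auto. unfold Rdiv.
  rewrite Rmult_plus_distr_r, !Rmult_assoc, Rinv_l by lra. fold f. lra. Qed.

Lemma E_lower k (Hk : kgood k) phi n i : (1 <= n)%nat -> (1 <= i)%nat ->
  str_increasing (k 0%nat) phi ->
  DY k (n - 1) phi <= EX k i (2 ^ n) phi.
Proof. intros Hn Hi Hphi. set (d := (2 ^ (n - 1))%nat).
  assert (Hd : (2 ^ n = 2 * d)%nat) by (unfold d; replace n with (S (n - 1)) at 1 by lia; reflexivity).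
  assert (Hdp : (0 < d)%nat) by apply pow2_pos.
  set (j' := ((i + d - 1) / d)%nat).
  pose proof (Nat.div_mod (i + d - 1) d ltac:(lia)) as Hdm. fold j' in Hdm.
  pose proof (Nat.mod_upper_bound (i + d - 1) d ltac:(lia)) as Hmu.
  assert (Hs1 : (i <= j' * d)%nat) by nia.
  assert (Hs2 : (j' * d <= i + d - 1)%nat) by nia.
  assert (Hj1 : (1 <= j')%nat) by nia.
  rewrite EX_avg.
  rewrite <- (EBW k Hk (i + 2 ^ n) (n - 1) j' phi Hj1).
  - apply avg_le. intros w Hw. apply Hphi.
    + apply window_alpha; auto.
    + unfold window. fold d. apply sub_win; lia.
  - pose proof (Nat.log2_le_lin j' ltac:(lia)). pose proof (Nat.pow_gt_lin_r 2 (n - 1) ltac:(lia)).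
    fold d in H0. nia. Qed.

Lemma E_upper k (Hk : kgood k) phi n i : (2 ^ n <= i)%nat ->
  str_increasing (k 0%nat) phi ->
  EX k i (2 ^ n) phi <= DY k (S n) phi.
Proof. intros Hi Hphi. set (L := (2 ^ n)%nat) in *. assert (HL : (0 < L)%nat) by apply pow2_pos.
  set (t := (i / L)%nat).
  pose proof (Nat.div_mod i L ltac:(lia)) as Hdm. fold t in Hdm.
  pose proof (Nat.mod_upper_bound i L ltac:(lia)) as Hmu.
  assert (Ht1 : (1 <= t)%nat) by nia.
  rewrite D2_DY by auto. rewrite EX_avg.
  rewrite <- (EPW k Hk (i + L) n t phi Ht1).
  - apply avg_le. intros w Hw. apply Hphi.
    + apply window_alpha; auto.
    + unfold window. fold L. replace (2 ^ S n)%nat with (2 * L)%nat by (unfold L; reflexivity).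
      apply sub_win; nia.
  - pose proof (Nat.log2_le_lin t ltac:(lia)). pose proof (Nat.pow_gt_lin_r 2 n ltac:(lia)).
    fold L in H0. nia. Qed.

Lemma EX_block k (Hk : kgood k) phi m j : (1 <= j)%nat ->
  EX k (j * 2 ^ m) (2 ^ m) phi = DY k m phi.
Proof. intros Hj. rewrite EX_avg. apply EBW; auto.
  pose proof (Nat.log2_le_lin j ltac:(lia)). pose proof (Nat.pow_gt_lin_r 2 m ltac:(lia)).
  pose proof (pow2_pos m). nia. Qed.

Theorem proposition3
  (k : nat -> nat)
  (hk_pos : forall n, (1 <= k n)%nat)
  (hk_grow : forall n, (1 <= n)%nat -> (k (n - 1) <= k n <= k (n - 1) * k (n - 1))%nat)
  (mu : list nat -> R)
  (hmu : forall x, Un_cv (cesaro k x) (mu x))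
  (phi : list nat -> R)
  (hphi : str_increasing (k O) phi)
  (n j : nat) (hn : (1 <= n)%nat) (hj : (1 <= j)%nat) :
  EX k (j * 2 ^ (n - 1))%nat ((2 ^ (n - 1))%nat) phi
    <= sumR (map (fun x => mu x * phi x) (words (k O) (2 ^ n)%nat))
  /\ sumR (map (fun x => mu x * phi x) (words (k O) (2 ^ n)%nat))
    <= EX k (j * 2 ^ (n + 1))%nat ((2 ^ (n + 1))%nat) phi.
Proof.
  assert (Hk : kgood k) by (split; auto).
  rewrite !EX_block by auto.
  change (sumR (map (fun x => mu x * phi x) (words (k O) (2 ^ n)%nat)))
    with (sm (words (k O) (2 ^ n)%nat) (fun x => mu x * phi x)).
  pose proof (lim_sm (words (k O) (2 ^ n)%nat) (cesaro k) mu phi hmu) as Hlim.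
  set (v := fun N => sm (words (k 0%nat) (2 ^ n)) (fun x => cesaro k x N * phi x)) in Hlim.
  assert (Hv : forall N, v N = sm (seq 1 (S N)) (fun i => EX k i (2 ^ n) phi) / INR (S N))
    by (intros; unfold v; apply ces_sum; auto).
  split.
  - apply (lim_lb v); auto. intros N. rewrite Hv. apply avg_seq_lb. intros i Hi.
    apply E_lower; auto.
  - rewrite Nat.add_1_r. eapply (lim_ub v); [|exact Hlim]. intros N. rewrite Hv.
    apply (avg_seq_ub _ _ (2 ^ n)%nat). intros i Hi. apply E_upper; auto. Qed.
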